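(* The Leftmost and Median mechanisms have unbounded approximation ratio of the Nash welfare, while the MidOrNearest mechanism $2$-approximates the Nash welfare.
   Context: One facility is located on $[0,1]$; $n\ge1$ agents (any $n$) have locations $x_1\le\dots\le x_n$ in $[0,1]$. For a facility at $y$, agent $i$ has utility $u_i=1-|x_i-y|$. The Nash welfare is $\left(\prod_{i=1}^n u_i\right)^{1/n}$. The Leftmost mechanism locates the facility at $x_1$; the Median mechanism at $x_{\lceil n/2\rceil}$; the MidOrNearest mechanism at $x_n$ if $x_n<1/2$, at $1/2$ if $x_1\le1/2\le x_n$, and at $x_1$ if $x_1>1/2$. For a mechanism $M$, the approximation ratio of the Nash welfare is the supremum over all profiles $x$ (all numbers of agents) of $\mathrm{OPT}(x)/\mathrm{NW}(M(x))$, where $\mathrm{OPT}(x)$ is the maximum Nash welfare over facility locations in $[0,1]$ (the ratio is $+\infty$ if $\mathrm{NW}(M(x))=0$); $M$ ''$\alpha$-approximates'' the Nash welfare if this ratio equals $\alpha$. *)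

(* Defs.v *)
From HB Require Import structures.
From mathcomp Require Import all_boot all_order all_algebra.
From mathcomp Require Import all_classical all_reals.
From mathcomp Require Import ereal topology normedtype exp.
Set Implicit Arguments. Unset Strict Implicit. Unset Printing Implicit Defensive.
Import Order.TTheory GRing.Theory Num.Theory.
Local Open Scope classical_set_scope.
Local Open Scope ring_scope.

Section Defs.
Variable R : realType.

Definition profile (x : seq R) : Prop :=
  (0 < size x)%N /\ sorted <=%R x /\ (forall xi, xi \in x -> 0 <= xi <= 1).

Definition utility (xi y : R) : R := 1 - `|xi - y|.

Definition NW (x : seq R) (y : R) : R :=
  (\prod_(xi <- x) utility xi y) `^ ((size x)%:R^-1).

Definition OPT (x : seq R) : R := sup [set NW x y | y in `[0, 1]].

Definition mechanism := seq R -> R.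

Definition Leftmost : mechanism := fun x => head 0 x.
(* x_{ceil(n/2)} (1-indexed) = index (n-1)/2 (0-indexed). *)
Definition Median : mechanism := fun x => nth 0 x ((size x).-1./2).
Definition MidOrNearest : mechanism := fun x =>
  if last 0 x < 2^-1 then last 0 x
  else if head 0 x <= 2^-1 then 2^-1
  else head 0 x.

Definition ratio_at (M : mechanism) (x : seq R) : \bar R :=
  if NW x (M x) == 0 then +oo%E else ((OPT x / NW x (M x))%:E).

Definition approx_ratio (M : mechanism) : \bar R :=
  ereal_sup [set ratio_at M x | x in profile].

End Defs.

(* Main.v *)
Require Import Defs.
From HB Require Import structures.
From mathcomp Require Import all_boot all_order all_algebra.
From mathcomp Require Import all_classical all_reals.
From mathcomp Require Import ereal topology normedtype exp.
From mathcomp Require Import lra.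
Import Order.TTheory GRing.Theory Num.Theory.
Local Open Scope ring_scope.

Section Aux.
Variable R : realType.
Implicit Types (x : seq R) (y a s q : R).

Lemma util_bd (xi y : R) : 0 <= xi <= 1 -> 0 <= y <= 1 -> 0 <= utility xi y <= 1.
Proof.
move=> /andP[h1 h2] /andP[h3 h4]; rewrite /utility.
case: (lerP 0 (xi - y)) => h; [rewrite ger0_norm // | rewrite ltr0_norm //];
  apply/andP; split; lra.
Qed.

Lemma prod_bd x y : (forall xi, xi \in x -> 0 <= xi <= 1) -> 0 <= y <= 1 ->
  0 <= \prod_(xi <- x) utility xi y <= 1.
Proof.
elim: x => [|b x IH] hx hy; first by rewrite big_nil ler01 lexx.
rewrite big_cons.
have /andP[b0 b1] := util_bd _ _ (hx b (mem_head _ _)) hy.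
have /andP[p0 p1] := IH (fun xi h => hx xi (@mem_behead _ (b :: x) xi h)) hy.
by rewrite mulr_ge0 ?mulr_ile1.
Qed.

Lemma prod_ge x y c : 0 <= c -> (forall xi, xi \in x -> c <= utility xi y) ->
  c ^+ size x <= \prod_(xi <- x) utility xi y.
Proof.
move=> c0; elim: x => [|b x IH] hx; first by rewrite big_nil expr0.
rewrite big_cons /= exprS.
apply: ler_pM => //; first exact: exprn_ge0.
  exact: hx (mem_head _ _).
exact: IH (fun xi h => hx xi (@mem_behead _ (b :: x) xi h)).
Qed.

Lemma powR_pow_inv a n : 0 <= a -> (0 < n)%N -> (a ^+ n) `^ (n%:R^-1) = a.
Proof.
move=> a0 n0; rewrite -powR_mulrn // -powRrM divff ?powRr1 //.
by rewrite pnatr_eq0 -lt0n.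
Qed.

Lemma NW_le1 x y : profile x -> 0 <= y <= 1 -> NW x y <= 1.
Proof.
move=> [_ [_ hx]] hy; have /andP[p0 p1] := prod_bd _ _ hx hy.
have := @ge0_ler_powR R ((size x)%:R^-1) _ _ 1 _ _ p1.
rewrite powR1; apply => //; rewrite ?nnegrE ?invr_ge0 ?ler0n //.
Qed.

Lemma OPT_le1 x : profile x -> OPT x <= 1.
Proof.
move=> px; apply: ge_sup.
  by exists (NW x 0), 0 => //=; rewrite in_itv /= lexx ler01.
move=> z [y hy <-]; apply: NW_le1 => //.
Qed.

Lemma OPT_ge x y : profile x -> 0 <= y <= 1 -> NW x y <= OPT x.
Proof.
move=> px hy; apply: ub_le_sup.
  exists 1 => z [w hw <-]; apply: NW_le1 => //; by move: hw; rewrite /= in_itv.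
by exists y => //=; rewrite in_itv.
Qed.


Lemma path_bd a (s : seq R) : path <=%R a s ->
  forall xi, xi \in a :: s -> a <= xi <= last a s.
Proof.
elim: s a => [|b s IH] a /=.
  by move=> _ xi; rewrite inE => /eqP->; rewrite lexx.
move=> /andP[ab hp] xi; rewrite inE => /orP[/eqP->|hxi].
  have /andP[_ h] := IH b hp b (mem_head _ _).
  by rewrite lexx (le_trans ab h).
have /andP[h1 h2] := IH b hp xi hxi.
by rewrite h2 (le_trans ab h1).
Qed.

Lemma MON_half x : profile x -> 2^-1 <= NW x (MidOrNearest x).
Proof.
move=> [sz [so hx]].
have hb : forall xi, xi \in x -> head 0 x <= xi <= last 0 x.
  by case: x sz so hx => // a s _ /= so _; apply: path_bd.
have hu : forall xi, xi \in x -> 2^-1 <= utility xi (MidOrNearest x).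
  move=> xi hxi; have /andP[h1 h2] := hb xi hxi.
  have /andP[h3 h4] := hx xi hxi.
  rewrite /MidOrNearest /utility.
  case: ifP => hl.
    rewrite ler0_norm ?subr_le0 //; lra.
  case: ifP => hh.
    move/negbT: hl; rewrite -leNgt => hl.
    case: (lerP 0 (xi - 2^-1)) => h; [rewrite ger0_norm // | rewrite ltr0_norm //]; lra.
  move/negbT: hh; rewrite -ltNge => hh.
  rewrite ger0_norm ?subr_ge0 //; lra.
have := prod_ge x (MidOrNearest x) (2^-1) _ hu.
rewrite invr_ge0 ler0n => /(_ isT) hp.
have := @ge0_ler_powR R ((size x)%:R^-1) _ ((2^-1) ^+ size x) _ _ _ hp.
rewrite powR_pow_inv //; first by apply; rewrite ?nnegrE ?invr_ge0 ?ler0n ?exprn_ge0 ?invr_ge0 ?ler0n //;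
  apply: le_trans hp; rewrite exprn_ge0 // invr_ge0 ler0n.
Qed.


Lemma bern q k : 0 <= q <= 1 -> q ^+ k * (1 + k%:R * (1 - q)) <= 1.
Proof.
move=> /andP[q0 q1]; elim: k => [|k IH]; first by rewrite expr0 mul0r addr0 mulr1.
have A0 : 0 <= q ^+ k by exact: exprn_ge0.
have h : 0 <= q ^+ k * ((1 - q) ^+ 2 * k.+1%:R).
  by rewrite mulr_ge0 // mulr_ge0 ?sqr_ge0 ?ler0n.
rewrite exprS -natr1; set A := q ^+ k in A0 h IH *; set K := (k%:R : R) in h IH *.
rewrite -natr1 -/K in h; nra.
Qed.

Lemma small_pow q : 0 <= q < 1 -> exists m, q ^+ m < 4^-1.
Proof.
move=> /andP[q0 q1].
have d0 : 0 < 1 - q by lra.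
set B := Num.Def.archi_bound (4 / (1 - q)).
have hB := @archi_boundP R (4 / (1 - q)) (divr_ge0 (ler0n _ _) (ltW d0)).
exists B; have := bern q B (ltac:(rewrite q0; lra) : 0 <= q <= 1).
move: hB; rewrite ltr_pdivrMr //; set K := (B%:R : R).
have A0 : 0 <= q ^+ B by exact: exprn_ge0.
set A := q ^+ B in A0 *; move=> hK hA.
have : 0 <= A * (K * (1 - q) - 4) by rewrite mulr_ge0 // subr_ge0 ltW.
nra.
Qed.


Definition fam (m : nat) : seq R := rcons (nseq m 0) (2^-1).

Lemma fam_profile m : profile (fam m).
Proof.
rewrite /fam; split; first by rewrite size_rcons.
split.
  elim: m => [|[|m] IH] //=; first by rewrite andbT invr_ge0 ler0n.
  by rewrite lexx.
move=> xi; rewrite mem_rcons inE => /orP[/eqP->|].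
  by rewrite invr_ge0 ler0n /=; lra.
by move/nseqP => [-> _]; rewrite lexx ler01.
Qed.

Lemma fam_MON m : MidOrNearest (fam m) = 2^-1.
Proof.
rewrite /MidOrNearest /fam last_rcons ltxx.
by case: m => [|m] /=; rewrite ?lexx ?invr_ge0 ?ler0n.
Qed.

Lemma fam_prod m y : \prod_(xi <- fam m) utility xi y = utility 0 y ^+ m * utility (2^-1) y.
Proof.
rewrite /fam; elim: m => [|m IH]; first by rewrite /= big_cons big_nil expr0 mul1r mulr1.
by rewrite /= big_cons IH exprS mulrA.
Qed.

Lemma fam_ratio s : 1 <= s < 2 -> exists m, (s%:E < ratio_at (@MidOrNearest R) (fam m))%E.
Proof.
move=> /andP[s1 s2].
have [m hm] := small_pow (s / 2) (ltac:(apply/andP; split; lra)).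
exists m.
have u0h : utility 0 (2^-1 : R) = 2^-1 by rewrite /utility sub0r normrN ger0_norm; lra.
have uhh : utility (2^-1) (2^-1 : R) = 1 by rewrite /utility subrr normr0 subr0.
have u00 : utility 0 (0 : R) = 1 by rewrite /utility subrr normr0 subr0.
have uh0 : utility (2^-1) (0 : R) = 2^-1 by rewrite /utility subr0 ger0_norm; lra.
have hsz : size (fam m) = m.+1 by rewrite /fam size_rcons size_nseq.
set p := ((m.+1)%:R : R)^-1.
have p0 : 0 < p by rewrite invr_gt0 ltr0n.
have eNh : NW (fam m) (MidOrNearest (fam m)) = ((2^-1) ^+ m) `^ p.
  by rewrite fam_MON /NW fam_prod u0h uhh mulr1 hsz.
have eN0 : NW (fam m) 0 = (2^-1) `^ p.
  by rewrite /NW fam_prod u00 uh0 expr1n mul1r hsz.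
have hpos : 0 < ((2^-1 : R) ^+ m) `^ p by rewrite powR_gt0 // exprn_gt0 // invr_gt0 ltr0n.
rewrite /ratio_at eNh (gt_eqF hpos) lte_fin ltr_pdivlMr //.
apply: (lt_le_trans _ (OPT_ge (fam m) 0 (fam_profile m) (ltac:(rewrite lexx ler01 //) : 0 <= 0 <= 1))).
rewrite eN0 -{1}(powR_pow_inv s m.+1) ?ltn0Sn //; last by lra.
rewrite -powRM ?exprn_ge0 ?invr_ge0 ?ler0n //; last by lra.
apply: gt0_ltr_powR => //; rewrite ?nnegrE ?mulr_ge0 ?exprn_ge0 ?invr_ge0 ?ler0n //; try lra.
rewrite exprS -mulrA -exprMn.
have -> : s * 2^-1 = s / 2 by [].
have : 0 <= (s / 2) ^+ m by rewrite exprn_ge0 //; lra.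
set Q := (s / 2) ^+ m in hm *; move=> Q0.
have : 0 <= (2 - s) * Q by rewrite mulr_ge0 //; lra.
nra.
Qed.


Lemma ratio_zero (M : mechanism R) : M [:: 0; 1] = 0 -> approx_ratio M = +oo%E.
Proof.
move=> hM; apply/eqP; rewrite eq_le leey /=.
apply: ereal_sup_ubound; exists [:: 0; 1].
  split => //; split; first by rewrite /= ler01.
  by move=> xi; rewrite !inE => /orP[/eqP->|/eqP->]; rewrite lexx ler01.
rewrite /ratio_at hM.
have -> : NW [:: 0; 1 : R] 0 = 0.
  rewrite /NW !big_cons big_nil /utility !subr0 normr1 normr0 subrr mulr1 mulr0 powR0 //.
  by rewrite invr_eq0 pnatr_eq0.
by rewrite eqxx.
Qed.

Lemma MON_ratio : approx_ratio (@MidOrNearest R) = 2%:E.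
Proof.
have hub : (approx_ratio (@MidOrNearest R) <= 2%:E)%E.
  apply: ge_ereal_sup => z [x px <-].
  have h := MON_half x px; have hO := OPT_le1 x px.
  have hpos : 0 < NW x (MidOrNearest x) by apply: lt_le_trans h; rewrite invr_gt0 ltr0n.
  rewrite /ratio_at (gt_eqF hpos) lee_fin ler_pdivrMr //; lra.
have key : forall s : R, s < 2 -> (s%:E < approx_ratio (@MidOrNearest R))%E.
  move=> s hs; have [m hm] := fam_ratio (Num.max s 1) (ltac:(rewrite le_max lexx orbT /= gt_max hs; lra)).
  apply: (le_lt_trans _ (lt_le_trans hm _)); first by rewrite lee_fin le_max lexx.
  by apply: ereal_sup_ubound; exists (fam m) => //; exact: fam_profile.
move: hub key; case: (approx_ratio _) => [r| |] //= hub key.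
  apply/eqP; rewrite eq_le hub /= lee_fin leNgt; apply/negP => hr.
  by have := key r hr; rewrite ltxx.
by have := key 0 (ltr0Sn _ 1).
Qed.

End Aux.

Theorem theorem11 (R : realType) :
  approx_ratio (@Leftmost R) = +oo%E /\
  approx_ratio (@Median R) = +oo%E /\
  approx_ratio (@MidOrNearest R) = 2%:E.
Proof.
split; first exact: ratio_zero.
split; first exact: ratio_zero.
exact: MON_ratio.
Qed.
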